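(* Let $\phi=k_1\wedge\dots\wedge k_m$ be a 3CNF in propositional variables $p_1,\dots,p_n$, and let $F(x_1,\dots,x_n,y_1,\dots,y_m)$ be any non-commutative formula over $GF(2)$. Then the propositional formula $$\Big(\neg F_{bool}(\bar p,\bar 0)\ \wedge\ F_{bool}\big(\bar p, Q^\phi_{1,bool}(\bar p),\dots,Q^\phi_{m,bool}(\bar p)\big)\Big)\ \rightarrow\ \neg\phi$$ has a Frege proof of size polynomial in the sizes of $F$ and $\phi$.
   Context: For a non-commutative formula $G$ over $GF(2)$, $G_{bool}$ is the Boolean formula obtained by replacing every $+$ gate by $\oplus$ (XOR), every $\times$ gate by $\wedge$, constants $0,1$ by $\mathsf{false},\mathsf{true}$, and each variable $x_i$ by $p_i$; $F_{bool}(\bar p,\bar 0)$ means $y_j$ replaced by $\mathsf{false}$, and $F_{bool}(\bar p,Q_{1,bool},\dots)$ means each $y_j$ replaced by the formula $Q^\phi_{j,bool}(\bar p)$. $Q^\phi_i=\mathrm{tr}'(k_i)$, where $\mathrm{tr}'(x)=1+x$ (i.e. $1-x$ over $GF(2)$), $\mathrm{tr}'(\neg x)=x$, and $\mathrm{tr}'(\ell_1\lor\dots\lor\ell_r)=\mathrm{tr}'(\ell_1)\cdots\mathrm{tr}'(\ell_r)$ (a tree of product gates). Frege: a fixed propositional proof system with finitely many sound axiom schemes and rules, implicationally complete, lines being Boolean formulas; size = total number of symbols. *)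

(* Defs.v *)
From Stdlib Require Import List Arith.
Import ListNotations.

(** * Boolean (propositional) formulas; variable p_i is [FVar i] (0-indexed). *)
Inductive form : Type :=
| FVar (i : nat)
| FTop | FBot
| FNot (A : form)
| FAnd (A B : form)
| FOr  (A B : form)
| FImp (A B : form)
| FXor (A B : form).

Fixpoint form_size (A : form) : nat :=
  match A with
  | FVar _ | FTop | FBot => 1
  | FNot A => S (form_size A)
  | FAnd A B | FOr A B | FImp A B | FXor A B => S (form_size A + form_size B)
  end.

(** Kleene's axioms for ->, /\, \/, ~, plus defining axioms for
    true, false and xor.  This is sound and implicationally complete. *)
Definition frege_axiom (f : form) : Prop :=
  exists A B C : form,
     f = FImp A (FImp B A)
  \/ f = FImp (FImp A B) (FImp (FImp A (FImp B C)) (FImp A C))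
  \/ f = FImp A (FImp B (FAnd A B))
  \/ f = FImp (FAnd A B) A
  \/ f = FImp (FAnd A B) B
  \/ f = FImp A (FOr A B)
  \/ f = FImp B (FOr A B)
  \/ f = FImp (FImp A C) (FImp (FImp B C) (FImp (FOr A B) C))
  \/ f = FImp (FImp A B) (FImp (FImp A (FNot B)) (FNot A))
  \/ f = FImp (FNot (FNot A)) A
  \/ f = FTop
  \/ f = FNot FBot
  \/ f = FImp (FXor A B) (FAnd (FOr A B) (FNot (FAnd A B)))
  \/ f = FImp (FAnd (FOr A B) (FNot (FAnd A B))) (FXor A B).

Definition frege_step (prev : list form) (f : form) : Prop :=
  frege_axiom f \/ exists A, In A prev /\ In (FImp A f) prev.

(** [frege_derivation L]: L is a derivation written in reverse order
    (head = last line). *)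
Inductive frege_derivation : list form -> Prop :=
| fd_nil : frege_derivation []
| fd_cons (f : form) (L : list form) :
    frege_derivation L -> frege_step L f -> frege_derivation (f :: L).

Definition frege_proof (L : list form) (goal : form) : Prop :=
  frege_derivation L /\ hd_error L = Some goal.

Definition proof_size (L : list form) : nat :=
  fold_right (fun f s => form_size f + s) 0 L.

Inductive ncf : Type :=
| NX (i : nat)
| NY (j : nat)
| NC (b : bool)            (* constants 0 (false) and 1 (true) *)
| NAdd (a b : ncf)
| NMul (a b : ncf).

Fixpoint ncf_size (g : ncf) : nat :=
  match g with
  | NX _ | NY _ | NC _ => 1
  | NAdd a b | NMul a b => S (ncf_size a + ncf_size b)
  end.

Fixpoint ncf_vars_ok (n m : nat) (g : ncf) : Prop :=
  match g with
  | NX i => i < n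
  | NY j => j < m
  | NC _ => True
  | NAdd a b | NMul a b => ncf_vars_ok n m a /\ ncf_vars_ok n m b
  end.

Fixpoint ncf_bool (sy : nat -> form) (g : ncf) : form :=
  match g with
  | NX i => FVar i
  | NY j => sy j
  | NC b => if b then FTop else FBot
  | NAdd a b => FXor (ncf_bool sy a) (ncf_bool sy b)
  | NMul a b => FAnd (ncf_bool sy a) (ncf_bool sy b)
  end.

(** * CNFs. A literal (i, true) is p_i, (i, false) is ~p_i. *)
Definition literal := (nat * bool)%type.
Definition clause := list literal.
Definition cnf := list clause.

Definition lit_bool (l : literal) : form :=
  if snd l then FVar (fst l) else FNot (FVar (fst l)).

Fixpoint clause_bool (k : clause) : form :=
  match k with
  | [] => FBot
  | [l] => lit_bool l
  | l :: ls => FOr (lit_bool l) (clause_bool ls)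
  end.

Fixpoint cnf_bool (phi : cnf) : form :=
  match phi with
  | [] => FTop
  | [k] => clause_bool k
  | k :: ks => FAnd (clause_bool k) (cnf_bool ks)
  end.

Definition is_3cnf (n : nat) (phi : cnf) : Prop :=
  Forall (fun k => length k = 3 /\ Forall (fun l => fst l < n) k) phi.

Definition trp_lit (l : literal) : ncf :=
  if snd l then NAdd (NC true) (NX (fst l)) else NX (fst l).

Fixpoint trp_clause (k : clause) : ncf :=
  match k with
  | [] => NC true
  | [l] => trp_lit l
  | l :: ls => NMul (trp_lit l) (trp_clause ls)
  end.

Definition Q (phi : cnf) (j : nat) : ncf := trp_clause (nth j phi []).
Definition Q_bool (phi : cnf) (j : nat) : form := ncf_bool (fun _ => FBot) (Q phi j).

Definition lemma5p3_formula (phi : cnf) (F : ncf) : form :=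
  FImp (FAnd (FNot (ncf_bool (fun _ => FBot) F)) (ncf_bool (Q_bool phi) F))
       (FNot (cnf_bool phi)).

(* Main.v *)
Require Import Defs.
From Stdlib Require Import List Arith Lia.
Import ListNotations.

Lemma step_mono L L' f : (forall x, In x L -> In x L') -> frege_step L f -> frege_step L' f.
Proof. intros H [Hs|[A [H1 H2]]]; [left; exact Hs|right; exists A; auto]. Qed.

Lemma deriv_app L1 L2 : frege_derivation L1 -> frege_derivation L2 -> frege_derivation (L2 ++ L1).
Proof.
  intros H1 H2. induction H2; simpl; [exact H1|].
  constructor; [exact IHfrege_derivation|].
  eapply step_mono; [|exact H]. intros x Hx. apply in_or_app; left; exact Hx.
Qed.

Lemma ps_app L1 L2 : proof_size (L1 ++ L2) = proof_size L1 + proof_size L2.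
Proof. induction L1; simpl; lia. Qed.

Definition Prv (s : nat) (f : form) := exists L, frege_proof L f /\ proof_size L <= s.

Lemma Prv_size s f : Prv s f -> form_size f <= s.
Proof. intros [L [[_ H] Hs]]. destruct L; inversion H; subst. simpl in Hs; lia. Qed.

Lemma Prv_mono s s' f : s <= s' -> Prv s f -> Prv s' f.
Proof. intros H [L [H1 H2]]. exists L; split; [exact H1|lia]. Qed.

Lemma Prv_mp s1 s2 t A B : Prv s1 A -> Prv s2 (FImp A B) -> form_size B <= t -> Prv (s1+s2+t) B.
Proof.
  intros [L1 [[D1 H1] S1]] [L2 [[D2 H2] S2]] Ht.
  destruct L1 as [|a L1]; inversion H1; subst.
  destruct L2 as [|b L2]; inversion H2; subst.
  exists (B :: (FImp A B :: L2) ++ (A :: L1)). split; [split|].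
  - constructor; [apply deriv_app; auto|]. right. exists A. split.
    + apply in_or_app; right; left; reflexivity.
    + left; reflexivity.
  - reflexivity.
  - simpl. rewrite ps_app. simpl in *. lia.
Qed.

Fixpoint subst (s : nat -> form) (f : form) : form :=
  match f with
  | FVar i => s i
  | FTop => FTop | FBot => FBot
  | FNot A => FNot (subst s A)
  | FAnd A B => FAnd (subst s A) (subst s B)
  | FOr A B => FOr (subst s A) (subst s B)
  | FImp A B => FImp (subst s A) (subst s B)
  | FXor A B => FXor (subst s A) (subst s B)
  end.

Ltac pick := repeat (solve [left; reflexivity] || right); try reflexivity.

Lemma subst_axiom s f : frege_axiom f -> frege_axiom (subst s f).
Proof.
  intros (A&B&C&H). exists (subst s A), (subst s B), (subst s C).
  repeat destruct H as [H|H]; subst; simpl; pick.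
Qed.

Lemma subst_deriv s L : frege_derivation L -> frege_derivation (map (subst s) L).
Proof.
  induction 1; simpl; constructor; auto.
  destruct H0 as [Ha|[A [H1 H2]]].
  - left; apply subst_axiom; auto.
  - right; exists (subst s A). split; apply (in_map (subst s)) in H1; auto.
    apply (in_map (subst s)) in H2; exact H2.
Qed.

Lemma size_subst s B f : (forall i, form_size (s i) <= B) -> 1 <= B ->
  form_size (subst s f) <= form_size f * B.
Proof.
  intros Hs HB. induction f; simpl; try nia. specialize (Hs i); lia.
Qed.

Lemma ps_subst s B L : (forall i, form_size (s i) <= B) -> 1 <= B ->
  proof_size (map (subst s) L) <= proof_size L * B.
Proof.
  intros Hs HB. induction L; simpl; [lia|].
  pose proof (size_subst s B a Hs HB). nia.
Qed.

Definition sub (l : list form) (i : nat) : form := nth i l FTop.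

Inductive Der (G : list form) : form -> Prop :=
| Dax f : frege_axiom f -> Der G f
| Dhyp f : In f G -> Der G f
| Dmp A B : Der G A -> Der G (FImp A B) -> Der G B.

Lemma Der_frege f : Der [] f -> exists L, frege_proof L f.
Proof.
  intro H. remember (@nil form) as G. induction H.
  - exists [f]. split; [|reflexivity]. constructor; [constructor|left; exact H].
  - subst; destruct H.
  - destruct IHDer1 as [L1 [D1 H1]], IHDer2 as [L2 [D2 H2]].
    destruct L1 as [|a L1]; inversion H1; subst.
    destruct L2 as [|b L2]; inversion H2; subst.
    exists (B :: (FImp A B :: L2) ++ (A :: L1)). split; [|reflexivity].
    constructor; [apply deriv_app; auto|]. right. exists A. split.
    + apply in_or_app; right; left; reflexivity.
    + left; reflexivity.
Qed.

Definition SchemaOK (K : nat) (T : form) : Prop :=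
  forall l B, Forall (fun f => form_size f <= B) l -> 1 <= B -> Prv (K*B) (subst (sub l) T).

Lemma schema_inst T : Der [] T -> exists K, SchemaOK K T.
Proof.
  intro H. destruct (Der_frege T H) as [L [D HL]]. exists (proof_size L).
  intros l B Hl HB. exists (map (subst (sub l)) L). split; [split|].
  - apply subst_deriv; auto.
  - destruct L; inversion HL; subst; reflexivity.
  - apply ps_subst; auto. intro i. unfold sub.
    destruct (Nat.lt_ge_cases i (length l)).
    + rewrite Forall_forall in Hl. apply Hl. apply nth_In; auto.
    + rewrite nth_overflow; simpl; auto.
Qed.

Lemma SchemaOK_mono K K' T : K <= K' -> SchemaOK K T -> SchemaOK K' T.
Proof. intros H S l B Hl HB. apply (Prv_mono (K*B)); [nia|apply S; auto]. Qed.

Ltac axw A B C := apply Dax; exists A, B, C; pick.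

Lemma Der_mono G G' f : Der G f -> (forall x, In x G -> In x G') -> Der G' f.
Proof. induction 1; intros; [apply Dax|apply Dhyp|eapply Dmp]; eauto. Qed.
Lemma W G X f : Der G f -> Der (X :: G) f.
Proof. intro H; eapply Der_mono; [exact H|simpl; auto]. Qed.

Lemma imp_refl G A : Der G (FImp A A).
Proof.
  apply (Dmp _ (FImp A (FImp (FImp A A) A))); [axw A (FImp A A) A|].
  apply (Dmp _ (FImp A (FImp A A))); [axw A A A|].
  axw A (FImp A A) A.
Qed.

Lemma DT G A B : Der (A :: G) B -> Der G (FImp A B).
Proof.
  induction 1.
  - eapply Dmp; [apply Dax; exact H|axw f A A].
  - destruct H as [<-|H]; [apply imp_refl|].
    eapply Dmp; [apply Dhyp; exact H|axw f A A].
  - eapply Dmp; [exact IHDer2|]. eapply Dmp; [exact IHDer1|]. axw A A0 B.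
Qed.

Ltac hyp := apply Dhyp; simpl; tauto.

Lemma mp G A B : Der G (FImp A B) -> Der G A -> Der G B.
Proof. intros; eapply Dmp; eauto. Qed.
Lemma andI G A B : Der G A -> Der G B -> Der G (FAnd A B).
Proof. intros. apply (mp _ B); [apply (mp _ A); [axw A B A|auto]|auto]. Qed.
Lemma andE1 G A B : Der G (FAnd A B) -> Der G A.
Proof. intros. apply (mp _ (FAnd A B)); [axw A B A|eauto]. Qed.
Lemma andE2 G A B : Der G (FAnd A B) -> Der G B.
Proof. intros. apply (mp _ (FAnd A B)); [axw A B A|eauto]. Qed.
Lemma orI1 G A B : Der G A -> Der G (FOr A B).
Proof. intros. apply (mp _ A); [axw A B A|eauto]. Qed.
Lemma orI2 G A B : Der G B -> Der G (FOr A B).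
Proof. intros. apply (mp _ B); [axw A B A|eauto]. Qed.
Lemma orE G A B C : Der G (FImp A C) -> Der G (FImp B C) -> Der G (FOr A B) -> Der G C.
Proof. intros. apply (mp _ (FOr A B)); [apply (mp _ (FImp B C)); [apply (mp _ (FImp A C)); [axw A B C|auto]|auto]|auto]. Qed.
Lemma negI G A B : Der G (FImp A B) -> Der G (FImp A (FNot B)) -> Der G (FNot A).
Proof. intros. apply (mp _ (FImp A (FNot B))); [apply (mp _ (FImp A B)); [axw A B A|auto]|auto]. Qed.
Lemma dne G A : Der G (FNot (FNot A)) -> Der G A.
Proof. intros. apply (mp _ (FNot (FNot A))); [axw A A A|eauto]. Qed.
Lemma top G : Der G FTop.
Proof. axw FTop FTop FTop. Qed.
Lemma notbot G : Der G (FNot FBot).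
Proof. axw FTop FTop FTop. Qed.
Lemma xorE1 G A B : Der G (FXor A B) -> Der G (FOr A B).
Proof. intros. apply (andE1 _ _ (FNot (FAnd A B))). apply (mp _ (FXor A B)); [axw A B A|eauto]. Qed.
Lemma xorE2 G A B : Der G (FXor A B) -> Der G (FNot (FAnd A B)).
Proof. intros. apply (andE2 _ (FOr A B)). apply (mp _ (FXor A B)); [axw A B A|eauto]. Qed.
Lemma xorI G A B : Der G (FOr A B) -> Der G (FNot (FAnd A B)) -> Der G (FXor A B).
Proof. intros. apply (mp _ (FAnd (FOr A B) (FNot (FAnd A B)))); [axw A B A|apply andI; eauto]. Qed.
Lemma exf G A B : Der G A -> Der G (FNot A) -> Der G B.
Proof.
  intros. apply dne. apply (negI _ _ A).
  - apply (mp _ A); [axw A (FNot B) A|auto].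
  - apply (mp _ (FNot A)); [axw (FNot A) (FNot B) A|auto].
Qed.
Lemma notE G A : Der G (FNot A) -> Der G A -> Der G FBot.
Proof. intros; eapply exf; eauto. Qed.
Lemma botE G B : Der G FBot -> Der G B.
Proof. intros; eapply exf; [eauto|apply notbot]. Qed.
Lemma negI' G A : Der (A :: G) FBot -> Der G (FNot A).
Proof.
  intros. apply (negI _ _ FBot); [apply DT; auto|].
  apply (mp _ (FNot FBot)); [axw (FNot FBot) A A|apply notbot].
Qed.

Lemma and_cong G A A' B B' : Der G (FImp A A') -> Der G (FImp B B') ->
  Der G (FImp (FAnd A B) (FAnd A' B')).
Proof.
  intros. apply DT. apply andI.
  - eapply mp; [apply W; eauto|eapply andE1; hyp].
  - eapply mp; [apply W; eauto|eapply andE2; hyp].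
Qed.

Lemma xor_cong G A A' B B' : Der G (FImp A A') -> Der G (FImp A' A) ->
  Der G (FImp B B') -> Der G (FImp B' B) -> Der G (FImp (FXor A B) (FXor A' B')).
Proof.
  intros H1 H2 H3 H4. apply DT. apply xorI.
  - apply (orE _ A B); [| |eapply xorE1; hyp].
    + apply DT; apply orI1. eapply mp; [do 2 apply W; eauto|hyp].
    + apply DT; apply orI2. eapply mp; [do 2 apply W; eauto|hyp].
  - apply negI'. eapply notE; [eapply xorE2; hyp|]. apply andI.
    + eapply mp; [do 2 apply W; eauto|eapply andE1; hyp].
    + eapply mp; [do 2 apply W; eauto|eapply andE2; hyp].
Qed.

Notation E A B := (FAnd (FImp A B) (FImp B A)).
Notation v0 := (FVar 0). Notation v1 := (FVar 1). Notation v2 := (FVar 2).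
Notation v3 := (FVar 3). Notation v4 := (FVar 4). Notation v5 := (FVar 5).
Notation v6 := (FVar 6).

Definition T_refl := FImp v0 (E v1 v1).
Definition T_and := FImp (FImp v0 (E v1 v2)) (FImp (FImp v0 (E v3 v4)) (FImp v0 (E (FAnd v1 v3) (FAnd v2 v4)))).
Definition T_xor := FImp (FImp v0 (E v1 v2)) (FImp (FImp v0 (E v3 v4)) (FImp v0 (E (FXor v1 v3) (FXor v2 v4)))).
Definition T_y := FImp (FImp v0 (FNot v1)) (FImp v0 (E v1 FBot)).
Definition T_final := FImp (FImp v0 (E v1 v2)) (FImp (FAnd (FNot v2) v1) (FNot v0)).
Definition T_andl := FImp (FImp v0 (FAnd v1 v2)) (FImp v0 v1).
Definition T_andr := FImp (FImp v0 (FAnd v1 v2)) (FImp v0 v2).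
Definition T_id := FImp v0 v0.
Definition T_pos := FImp v0 (FNot (FXor FTop v0)).
Definition T_clause := FImp (FImp v1 (FNot v4)) (FImp (FImp v2 (FNot v5)) (FImp (FImp v3 (FNot v6))
   (FImp (FImp v0 (FOr v1 (FOr v2 v3))) (FImp v0 (FNot (FAnd v4 (FAnd v5 v6))))))).

Lemma D_refl : Der [] T_refl.
Proof. apply DT. apply andI; apply imp_refl. Qed.
Lemma D_and : Der [] T_and.
Proof.
  do 3 apply DT. assert (H1 : Der [v0; FImp v0 (E v3 v4); FImp v0 (E v1 v2)] (E v1 v2)) by (eapply mp; hyp).
  assert (H2 : Der [v0; FImp v0 (E v3 v4); FImp v0 (E v1 v2)] (E v3 v4)) by (eapply mp; hyp).
  apply andI; apply and_cong; eauto using andE1, andE2.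
Qed.
Lemma D_xor : Der [] T_xor.
Proof.
  do 3 apply DT. assert (H1 : Der [v0; FImp v0 (E v3 v4); FImp v0 (E v1 v2)] (E v1 v2)) by (eapply mp; hyp).
  assert (H2 : Der [v0; FImp v0 (E v3 v4); FImp v0 (E v1 v2)] (E v3 v4)) by (eapply mp; hyp).
  apply andI; apply xor_cong; eauto using andE1, andE2.
Qed.
Lemma D_y : Der [] T_y.
Proof.
  do 2 apply DT. apply andI.
  - apply DT. apply (notE _ v1); [apply (mp _ v0); hyp|hyp].
  - apply DT. apply botE; hyp.
Qed.
Lemma D_final : Der [] T_final.
Proof.
  do 2 apply DT. apply negI'. eapply notE; [eapply andE1; hyp|].
  eapply mp; [eapply andE1; eapply mp; hyp|eapply andE2; hyp].
Qed.
Lemma D_andl : Der [] T_andl.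
Proof. do 2 apply DT. eapply andE1. eapply mp; hyp. Qed.
Lemma D_andr : Der [] T_andr.
Proof. do 2 apply DT. eapply andE2. eapply mp; hyp. Qed.
Lemma D_id : Der [] T_id.
Proof. apply imp_refl. Qed.
Lemma D_pos : Der [] T_pos.
Proof. apply DT. apply negI'. eapply notE; [eapply xorE2; hyp|apply andI; [apply top|hyp]]. Qed.
Lemma D_clause : Der [] T_clause.
Proof.
  do 5 apply DT. apply negI'.
  apply (orE _ v1 (FOr v2 v3)); [| |apply (mp _ v0); hyp].
  - apply DT. apply (notE _ v4); [apply (mp _ v1); hyp|]. apply (andE1 _ _ (FAnd v5 v6)); hyp.
  - apply DT. apply (orE _ v2 v3); [| |hyp].
    + apply DT. apply (notE _ v5); [apply (mp _ v2); hyp|]. apply (andE1 _ _ v6); apply (andE2 _ v4); hyp.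
    + apply DT. apply (notE _ v6); [apply (mp _ v3); hyp|]. apply (andE2 _ v5); apply (andE2 _ v4); hyp.
Qed.

Definition Schemas K := SchemaOK K T_refl /\ SchemaOK K T_and /\ SchemaOK K T_xor /\
  SchemaOK K T_y /\ SchemaOK K T_final /\ SchemaOK K T_andl /\ SchemaOK K T_andr /\
  SchemaOK K T_id /\ SchemaOK K T_pos /\ SchemaOK K T_clause.

Lemma schemas_ex : exists K, Schemas K.
Proof.
  destruct (schema_inst _ D_refl) as [K1 H1].
  destruct (schema_inst _ D_and) as [K2 H2].
  destruct (schema_inst _ D_xor) as [K3 H3].
  destruct (schema_inst _ D_y) as [K4 H4].
  destruct (schema_inst _ D_final) as [K5 H5].
  destruct (schema_inst _ D_andl) as [K6 H6].
  destruct (schema_inst _ D_andr) as [K7 H7].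
  destruct (schema_inst _ D_id) as [K8 H8].
  destruct (schema_inst _ D_pos) as [K9 H9].
  destruct (schema_inst _ D_clause) as [K10 H10].
  exists (K1+K2+K3+K4+K5+K6+K7+K8+K9+K10).
  repeat split; eapply SchemaOK_mono; try eassumption; lia.
Qed.

Ltac fa := repeat (apply Forall_cons; [lia|]); apply Forall_nil.

Lemma app1 U s X Y : Prv s X -> Prv U (FImp X Y) -> Prv (s+2*U) Y.
Proof.
  intros H1 H2. pose proof (Prv_size _ _ H2) as S2. simpl in S2.
  eapply Prv_mono; [|eapply Prv_mp; [exact H1|exact H2|apply le_n]]. lia.
Qed.

Lemma app2 U s1 s2 X1 X2 Y : Prv s1 X1 -> Prv s2 X2 -> Prv U (FImp X1 (FImp X2 Y)) -> Prv (s1+s2+3*U) Y.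
Proof.
  intros H1 H2 H3. pose proof (Prv_size _ _ H3) as S3. simpl in S3.
  pose proof (Prv_mp _ _ _ _ _ H1 H3 (le_n _)) as H4.
  eapply Prv_mono; [|eapply Prv_mp; [exact H2|exact H4|apply le_n]]. simpl in *. lia.
Qed.

Lemma app4 U s1 s2 s3 s4 X1 X2 X3 X4 Y : Prv s1 X1 -> Prv s2 X2 -> Prv s3 X3 -> Prv s4 X4 ->
  Prv U (FImp X1 (FImp X2 (FImp X3 (FImp X4 Y)))) -> Prv (s1+s2+s3+s4+5*U) Y.
Proof.
  intros H1 H2 H3 H4 H5. pose proof (Prv_size _ _ H5) as S5. simpl in S5.
  pose proof (Prv_mp _ _ _ _ _ H1 H5 (le_n _)) as H6.
  pose proof (Prv_mp _ _ _ _ _ H2 H6 (le_n _)) as H7.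
  pose proof (Prv_mp _ _ _ _ _ H3 H7 (le_n _)) as H8.
  eapply Prv_mono; [|eapply Prv_mp; [exact H4|exact H8|apply le_n]]. simpl in *. lia.
Qed.


Lemma R_refl K B P A : Schemas K -> 1 <= B -> form_size P <= B -> form_size A <= B ->
  Prv (K*B) (FImp P (E A A)).
Proof. intros HK HB ? ?. destruct HK as (Hs&_). exact (Hs [P;A] B ltac:(fa) HB). Qed.

Lemma R_and K B P A A' C C' s1 s2 : Schemas K -> 1 <= B -> form_size P <= B ->
  form_size A <= B -> form_size A' <= B -> form_size C <= B -> form_size C' <= B ->
  Prv s1 (FImp P (E A A')) -> Prv s2 (FImp P (E C C')) ->
  Prv (s1+s2+3*(K*B)) (FImp P (E (FAnd A C) (FAnd A' C'))).
Proof. intros HK HB ? ? ? ? ? H1 H2. destruct HK as (_&Hs&_).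
  exact (app2 _ _ _ _ _ _ H1 H2 (Hs [P;A;A';C;C'] B ltac:(fa) HB)). Qed.

Lemma R_xor K B P A A' C C' s1 s2 : Schemas K -> 1 <= B -> form_size P <= B ->
  form_size A <= B -> form_size A' <= B -> form_size C <= B -> form_size C' <= B ->
  Prv s1 (FImp P (E A A')) -> Prv s2 (FImp P (E C C')) ->
  Prv (s1+s2+3*(K*B)) (FImp P (E (FXor A C) (FXor A' C'))).
Proof. intros HK HB ? ? ? ? ? H1 H2. destruct HK as (_&_&Hs&_).
  exact (app2 _ _ _ _ _ _ H1 H2 (Hs [P;A;A';C;C'] B ltac:(fa) HB)). Qed.

Lemma R_y K B P Q s : Schemas K -> 1 <= B -> form_size P <= B -> form_size Q <= B ->
  Prv s (FImp P (FNot Q)) -> Prv (s+2*(K*B)) (FImp P (E Q FBot)).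
Proof. intros HK HB ? ? H1. destruct HK as (_&_&_&Hs&_).
  exact (app1 _ _ _ _ H1 (Hs [P;Q] B ltac:(fa) HB)). Qed.

Lemma R_final K B P X Y s : Schemas K -> 1 <= B -> form_size P <= B -> form_size X <= B ->
  form_size Y <= B ->
  Prv s (FImp P (E X Y)) -> Prv (s+2*(K*B)) (FImp (FAnd (FNot Y) X) (FNot P)).
Proof. intros HK HB ? ? ? H1. destruct HK as (_&_&_&_&Hs&_).
  exact (app1 _ _ _ _ H1 (Hs [P;X;Y] B ltac:(fa) HB)). Qed.

Lemma R_andl K B P X Y s : Schemas K -> 1 <= B -> form_size P <= B -> form_size X <= B ->
  form_size Y <= B ->
  Prv s (FImp P (FAnd X Y)) -> Prv (s+2*(K*B)) (FImp P X).
Proof. intros HK HB ? ? ? H1. destruct HK as (_&_&_&_&_&Hs&_).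
  exact (app1 _ _ _ _ H1 (Hs [P;X;Y] B ltac:(fa) HB)). Qed.

Lemma R_andr K B P X Y s : Schemas K -> 1 <= B -> form_size P <= B -> form_size X <= B ->
  form_size Y <= B ->
  Prv s (FImp P (FAnd X Y)) -> Prv (s+2*(K*B)) (FImp P Y).
Proof. intros HK HB ? ? ? H1. destruct HK as (_&_&_&_&_&_&Hs&_).
  exact (app1 _ _ _ _ H1 (Hs [P;X;Y] B ltac:(fa) HB)). Qed.

Lemma R_id K B P : Schemas K -> 1 <= B -> form_size P <= B -> Prv (K*B) (FImp P P).
Proof. intros HK HB ?. destruct HK as (_&_&_&_&_&_&_&Hs&_). exact (Hs [P] B ltac:(fa) HB). Qed.

Lemma R_pos K B a : Schemas K -> 1 <= B -> form_size a <= B -> Prv (K*B) (FImp a (FNot (FXor FTop a))).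
Proof. intros HK HB ?. destruct HK as (_&_&_&_&_&_&_&_&Hs&_). exact (Hs [a] B ltac:(fa) HB). Qed.

Lemma R_clause K B P L1 L2 L3 T1 T2 T3 s1 s2 s3 s4 : Schemas K -> 1 <= B -> form_size P <= B ->
  form_size L1 <= B -> form_size L2 <= B -> form_size L3 <= B ->
  form_size T1 <= B -> form_size T2 <= B -> form_size T3 <= B ->
  Prv s1 (FImp L1 (FNot T1)) -> Prv s2 (FImp L2 (FNot T2)) -> Prv s3 (FImp L3 (FNot T3)) ->
  Prv s4 (FImp P (FOr L1 (FOr L2 L3))) ->
  Prv (s1+s2+s3+s4+5*(K*B)) (FImp P (FNot (FAnd T1 (FAnd T2 T3)))).
Proof. intros HK HB ? ? ? ? ? ? ? H1 H2 H3 H4. destruct HK as (_&_&_&_&_&_&_&_&_&Hs).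
  exact (app4 _ _ _ _ _ _ _ _ _ _ H1 H2 H3 H4 (Hs [P;L1;L2;L3;T1;T2;T3] B ltac:(fa) HB)). Qed.

Lemma fs_pos f : 1 <= form_size f.
Proof. destruct f; simpl; lia. Qed.

Lemma fs_and A B : form_size (FAnd A B) = S (form_size A + form_size B).
Proof. reflexivity. Qed.

Lemma cnf_cons2 k k' ks : cnf_bool (k :: k' :: ks) = FAnd (clause_bool k) (cnf_bool (k' :: ks)).
Proof. reflexivity. Qed.

Lemma len_cnf ks : length ks <= form_size (cnf_bool ks).
Proof.
  induction ks as [|k ks IH]; [simpl; lia|]. destruct ks as [|k' ks'].
  - simpl. apply fs_pos.
  - rewrite cnf_cons2. change (length (k :: k' :: ks')) with (S (length (k' :: ks'))).
    rewrite fs_and. lia.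
Qed.

Lemma clause_le ks j : j < length ks -> form_size (clause_bool (nth j ks [])) <= form_size (cnf_bool ks).
Proof.
  revert j. induction ks as [|k ks IH]; intros j Hj; [simpl in *; lia|].
  destruct ks as [|k' ks'].
  - destruct j; [apply le_n|simpl in Hj; lia].
  - rewrite cnf_cons2, fs_and. destruct j; [simpl; lia|].
    specialize (IH j ltac:(simpl in *; lia)). change (nth (S j) (k :: k' :: ks') []) with (nth j (k' :: ks') []). unfold clause in *. lia.
Qed.

Lemma size_F0 G : form_size (ncf_bool (fun _ => FBot) G) = ncf_size G.
Proof. induction G; simpl; try (destruct b; simpl); lia. Qed.

Lemma nth3 n phi j : is_3cnf n phi -> j < length phi ->
  exists l1 l2 l3, nth j phi [] = [l1; l2; l3].
Proof.
  intros H Hj. unfold is_3cnf in H. rewrite Forall_forall in H.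
  destruct (H _ (nth_In phi [] Hj)) as [Hl _].
  destruct (nth j phi []) as [|a [|b [|c [|d r]]]]; simpl in Hl; try lia. eauto.
Qed.

Lemma sizeQj n phi j : is_3cnf n phi -> j < length phi -> form_size (Q_bool phi j) <= 11.
Proof.
  intros H Hj. destruct (nth3 n phi j H Hj) as (l1&l2&l3&E3).
  unfold Q_bool, Q. rewrite E3. simpl.
  destruct l1 as [? []], l2 as [? []], l3 as [? []]; simpl; lia.
Qed.

Lemma sizeQ n phi G : is_3cnf n phi -> ncf_vars_ok n (length phi) G ->
  form_size (ncf_bool (Q_bool phi) G) <= 11 * ncf_size G.
Proof.
  intros H. induction G; simpl; intros V; try (destruct b; simpl); try lia.
  - pose proof (sizeQj n phi j H V). lia.
  - destruct V. specialize (IHG1 H0); specialize (IHG2 H1); lia.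
  - destruct V. specialize (IHG1 H0); specialize (IHG2 H1); lia.
Qed.

Lemma extract K B P : Schemas K -> 1 <= B -> form_size P <= B ->
  forall ks s, form_size (cnf_bool ks) <= B -> Prv s (FImp P (cnf_bool ks)) ->
  forall j, j < length ks -> Prv (s + 2 * S j * (K*B)) (FImp P (clause_bool (nth j ks []))).
Proof.
  intros HK HB HP. induction ks as [|k ks IH]; intros s Hs H j Hj; simpl in Hj; [lia|].
  destruct ks as [|k' ks'].
  - destruct j; [|simpl in Hj; lia]. simpl. eapply Prv_mono; [|exact H]. lia.
  - rewrite cnf_cons2 in *. rewrite fs_and in Hs.
    destruct j.
    + eapply Prv_mono; [|apply (R_andl K B P (clause_bool k) (cnf_bool (k' :: ks')) s HK HB HP ltac:(lia) ltac:(lia) H)]. lia.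
    + pose proof (R_andr K B P (clause_bool k) (cnf_bool (k' :: ks')) _ HK HB HP ltac:(lia) ltac:(lia) H) as H2.
      specialize (IH _ ltac:(lia) H2 j ltac:(simpl in *; lia)).
      change (nth (S j) (k :: k' :: ks') []) with (nth j (k' :: ks') []).
      eapply Prv_mono; [|exact IH]. lia.
Qed.

Lemma R_lit K B l : Schemas K -> 3 <= B ->
  Prv (K*B) (FImp (lit_bool l) (FNot (ncf_bool (fun _ => FBot) (trp_lit l)))).
Proof.
  intros HK HB. destruct l as [i []]; unfold lit_bool, trp_lit; simpl.
  - apply R_pos; simpl; auto; lia.
  - apply R_id; simpl; auto; lia.
Qed.

Lemma size_lit l : form_size (lit_bool l) <= 2.
Proof. destruct l as [i []]; simpl; lia. Qed.
Lemma size_trp l : form_size (ncf_bool (fun _ => FBot) (trp_lit l)) <= 3.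
Proof. destruct l as [i []]; simpl; lia. Qed.

Lemma leaf K B n phi j : Schemas K -> is_3cnf n phi -> j < length phi -> 11 <= B ->
  form_size (cnf_bool phi) <= B ->
  Prv ((2*j + 13)*(K*B)) (FImp (cnf_bool phi) (E (Q_bool phi j) FBot)).
Proof.
  intros HK H3 Hj HB HP.
  destruct (nth3 n phi j H3 Hj) as (l1&l2&l3&E3).
  pose proof (R_id K B (cnf_bool phi) HK ltac:(lia) HP) as Hid.
  pose proof (extract K B (cnf_bool phi) HK ltac:(lia) HP phi _ HP Hid j Hj) as Hext.
  pose proof (clause_le phi j Hj) as Hcl.
  unfold clause, cnf in *. rewrite E3 in Hext, Hcl.
  change (clause_bool [l1;l2;l3]) with (FOr (lit_bool l1) (FOr (lit_bool l2) (lit_bool l3))) in Hext, Hcl.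
  pose proof (size_lit l1); pose proof (size_lit l2); pose proof (size_lit l3).
  pose proof (size_trp l1); pose proof (size_trp l2); pose proof (size_trp l3).
  pose proof (R_clause K B (cnf_bool phi) (lit_bool l1) (lit_bool l2) (lit_bool l3) (ncf_bool (fun _ => FBot) (trp_lit l1))
    (ncf_bool (fun _ => FBot) (trp_lit l2)) (ncf_bool (fun _ => FBot) (trp_lit l3)) _ _ _ _
    HK ltac:(lia) HP ltac:(lia) ltac:(lia) ltac:(lia) ltac:(lia) ltac:(lia) ltac:(lia)
    (R_lit K B l1 HK ltac:(lia)) (R_lit K B l2 HK ltac:(lia)) (R_lit K B l3 HK ltac:(lia)) Hext) as Hc.
  assert (HQ : Q_bool phi j = FAnd (ncf_bool (fun _ => FBot) (trp_lit l1))
    (FAnd (ncf_bool (fun _ => FBot) (trp_lit l2)) (ncf_bool (fun _ => FBot) (trp_lit l3))))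
    by (unfold Q_bool, Q; unfold clause, cnf; rewrite E3; reflexivity).
  rewrite HQ.
  pose proof (R_y K B (cnf_bool phi) (FAnd (ncf_bool (fun _ => FBot) (trp_lit l1)) (FAnd (ncf_bool (fun _ => FBot) (trp_lit l2)) (ncf_bool (fun _ => FBot) (trp_lit l3)))) _ HK ltac:(lia) HP ltac:(simpl; lia) Hc) as Hy.
  eapply Prv_mono; [|exact Hy]. nia.
Qed.

Lemma main_ind K n phi N : Schemas K -> is_3cnf n phi -> form_size (cnf_bool phi) <= N -> 1 <= N ->
  forall G, ncf_vars_ok n (length phi) G -> ncf_size G <= N ->
  Prv (ncf_size G * ((2*N+20)*(K*(12*N))))
      (FImp (cnf_bool phi) (E (ncf_bool (Q_bool phi) G) (ncf_bool (fun _ => FBot) G))).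
Proof.
  intros HK H3 HP HN.
  assert (HW : 3 * (K*(12*N)) <= (2*N+20)*(K*(12*N))) by nia.
  assert (HW1 : K*(12*N) <= (2*N+20)*(K*(12*N))) by nia.
  set (W := (2*N+20)*(K*(12*N))) in *.
  set (U := K*(12*N)) in *.
  pose proof (len_cnf phi) as Hlen.
  induction G; intros V Hs; simpl in *.
  - eapply Prv_mono; [|apply (R_refl K (12*N)); simpl; auto; lia]. unfold U in *; lia.
  - eapply Prv_mono; [|apply (leaf K (12*N) n phi j HK H3 V); lia]. unfold U, W in *. nia.
  - destruct b; (eapply Prv_mono; [|apply (R_refl K (12*N)); simpl; auto; lia]); unfold U in *; lia.
  - destruct V as [V1 V2].
    pose proof (sizeQ n phi G1 H3 V1); pose proof (sizeQ n phi G2 H3 V2).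
    pose proof (size_F0 G1); pose proof (size_F0 G2).
    specialize (IHG1 V1 ltac:(lia)); specialize (IHG2 V2 ltac:(lia)).
    eapply Prv_mono; [|apply (R_xor K (12*N) (cnf_bool phi) (ncf_bool (Q_bool phi) G1) (ncf_bool (fun _ => FBot) G1) (ncf_bool (Q_bool phi) G2) (ncf_bool (fun _ => FBot) G2) _ _ HK ltac:(lia) ltac:(lia) ltac:(lia) ltac:(lia) ltac:(lia) ltac:(lia) IHG1 IHG2)].
    unfold U in *. nia.
  - destruct V as [V1 V2].
    pose proof (sizeQ n phi G1 H3 V1); pose proof (sizeQ n phi G2 H3 V2).
    pose proof (size_F0 G1); pose proof (size_F0 G2).
    specialize (IHG1 V1 ltac:(lia)); specialize (IHG2 V2 ltac:(lia)).
    eapply Prv_mono; [|apply (R_and K (12*N) (cnf_bool phi) (ncf_bool (Q_bool phi) G1) (ncf_bool (fun _ => FBot) G1) (ncf_bool (Q_bool phi) G2) (ncf_bool (fun _ => FBot) G2) _ _ HK ltac:(lia) ltac:(lia) ltac:(lia) ltac:(lia) ltac:(lia) ltac:(lia) IHG1 IHG2)].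
    unfold U in *. nia.
Qed.

Theorem lemma5p3 :
  exists c : nat,
    forall (n m : nat) (phi : cnf) (F : ncf),
      length phi = m ->
      is_3cnf n phi ->
      ncf_vars_ok n m F ->
      exists L : list form,
        frege_proof L (lemma5p3_formula phi F) /\
        proof_size L <= c * (ncf_size F + form_size (cnf_bool phi)) ^ c + c.
Proof.
  destruct schemas_ex as [K HK]. exists (288*K + 3).
  intros n m phi F Hm H3 V. subst m.
  set (N := ncf_size F + form_size (cnf_bool phi)).
  assert (HN : 1 <= N) by (pose proof (fs_pos (cnf_bool phi)); unfold N; lia).
  pose proof (main_ind K n phi N HK H3 ltac:(unfold N; lia) HN F V ltac:(unfold N; lia)) as Hm.
  pose proof (sizeQ n phi F H3 V). pose proof (size_F0 F).
  pose proof (R_final K (12*N) (cnf_bool phi) (ncf_bool (Q_bool phi) F) (ncf_bool (fun _ => FBot) F) _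
     HK ltac:(lia) ltac:(unfold N in *; lia) ltac:(unfold N in *; lia) ltac:(unfold N in *; lia) Hm) as Hf.
  destruct Hf as [L [HL HS]]. exists L. split; [exact HL|].
  assert (HF : ncf_size F <= N) by (unfold N; lia).
  assert (Hp : N^3 <= N^(288*K+3)) by (apply Nat.pow_le_mono_r; lia).
  assert (H3' : N^3 = N*N*N) by (simpl; ring).
  assert (Hb : ncf_size F * ((2 * N + 20) * (K * (12 * N))) + 2 * (K * (12 * N)) <= 288*K*N^3).
  { rewrite H3'. assert (ncf_size F * ((2 * N + 20) * (K * (12 * N))) <= N * ((22*N) * (K * (12 * N)))).
    { apply Nat.mul_le_mono; [lia|]. apply Nat.mul_le_mono_r. lia. }
    assert (HNN : N <= N*N*N) by nia.
    assert (2 * (K * (12 * N)) <= 24 * K * (N*N*N)) by (apply (Nat.mul_le_mono_l _ _ (24*K)) in HNN; lia). nia. }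
  assert (288*K*N^(288*K+3) <= (288*K+3)*N^(288*K+3)) by nia.
  fold N. nia.
Qed.
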